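(* Let $C\subset\mathbb{R}^n$ be a pointed, $n$-dimensional closed convex cone and $\Omega=S^{n-1}\cap\operatorname{int}C^{\circ}$. Let $\mu$ be a nonzero, finite Borel measure on $\Omega$, and let $(\omega_i)_{i\in\mathbb{N}}$ be compact subsets of $\Omega$ with $\omega_i\subset\operatorname{int}\omega_{i+1}$ and $\bigcup_i\omega_i=\Omega$. Let $\mu_i(\sigma)=\mu(\sigma\cap\omega_i)$, let $i_0$ be such that $\mu_{i_0}\neq0$, and for $f\in C^+(\omega_i)$ let $I_{\mu_i}(f)=\gamma^n([f])\int_{\omega_i}f\,d\mu_i$, where $[f]$ is the Wulff shape associated with $(C,\omega_i,f)$. Suppose that for each $i\ge i_0$ there is a $C$-pseudo-cone $K_i\in\mathcal{K}(C,\omega_i)$ with $I_{\mu_i}(\bar h_{K_i})=\sup\{I_{\mu_i}(f):f\in C^+(\omega_i)\}$. Then there exists a constant $a>0$ such that $I_{\mu_i}(\bar h_{K_i})>a$ for all $i\ge i_0$.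
   Context: $C^{\circ}=\{x:\langle x,y\rangle\le 0\ \forall y\in C\}$. A pseudo-cone is a nonempty closed convex set $K$ with $o\notin K$ and $\lambda K\subseteq K$ for $\lambda\ge1$; it is a $C$-pseudo-cone if its recession cone $\{z:K+z\subseteq K\}$ equals $C$. Support function $h_K(x)=\sup_{y\in K}\langle x,y\rangle$ on $C^{\circ}$, $\bar h_K=-h_K$; $H_K^-(u)=\{x:\langle x,u\rangle\le h_K(u)\}$. $\mathcal{K}(C,\omega)$ is the set of $C$-pseudo-cones $K$ with $K=C\cap\bigcap_{u\in\omega}H^-_K(u)$. $C^+(\omega)$ denotes the set of continuous functions $\omega\to(0,\infty)$. The Wulff shape of a positive continuous $h$ on compact $\omega\subset\Omega$ is $[h]=C\cap\bigcap_{u\in\omega}\{y:\langle y,u\rangle\le -h(u)\}$. $\gamma^n$ is the standard Gaussian probability measure on $\mathbb{R}^n$. *)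

(* Defs.v *)
From HB Require Import structures.
From mathcomp Require Import all_boot all_order all_algebra.
From mathcomp Require Import all_classical all_reals all_analysis.
Set Implicit Arguments. Unset Strict Implicit. Unset Printing Implicit Defensive.
Import Order.TTheory GRing.Theory Num.Theory.
Import numFieldNormedType.Exports.
Local Open Scope classical_set_scope.
Local Open Scope ring_scope.

Section Defs.
Variables (R : realType) (n : nat).

Notation V := 'rV[R]_n.

Definition dotv (x y : V) : R := \sum_(i < n) x 0 i * y 0 i.

Definition BorelRn := g_sigma_algebraType (@open V).

Definition convex_set (A : set V) : Prop :=
  forall x y (t : R), A x -> A y -> 0 <= t <= 1 -> A ((1 - t) *: x + t *: y).

Definition closed_convex_cone (C : set V) : Prop :=
  [/\ C 0, closed C, convex_set C & forall (l : R) x, 0 <= l -> C x -> C (l *: x)].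

Definition pointed (C : set V) : Prop := forall x, C x -> C (- x) -> x = 0.

Definition polar (C : set V) : set V := [set x | forall y, C y -> dotv x y <= 0].

Definition Omega (C : set V) : set V := [set u | dotv u u = 1 /\ (polar C)° u].

Definition rel_interior (S A : set V) : set V :=
  [set x | exists U : set V, [/\ open U, U x & U `&` S `<=` A]].

Definition pseudo_cone (K : set V) : Prop :=
  [/\ K !=set0, closed K, convex_set K, ~ K 0 &
      forall (l : R) y, 1 <= l -> K y -> K (l *: y)].

Definition rec_cone (K : set V) : set V := [set z | forall y, K y -> K (y + z)].

Definition C_pseudo_cone (C K : set V) : Prop := pseudo_cone K /\ rec_cone K = C.

(* support function h_K (extended-real valued; finite on int C° for pseudo-cones) *)
Definition supp (K : set V) (x : V) : \bar R :=
  ereal_sup [set (dotv x y)%:E | y in K].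

Definition hbar (K : set V) (u : V) : R := - fine (supp K u).

Definition halfsp (K : set V) (u : V) : set V := [set x | (dotv x u)%:E <= supp K u]%E.

Definition KCw (C w K : set V) : Prop :=
  C_pseudo_cone C K /\ K = C `&` \bigcap_(u in w) halfsp K u.

(* f ∈ C^+(ω) : continuous positive functions on ω (values off ω irrelevant) *)
Definition Cplus (w : set V) (f : V -> R) : Prop :=
  {within w, continuous f} /\ forall u, w u -> 0 < f u.

Definition wulff (C w : set V) (h : V -> R) : set V :=
  C `&` \bigcap_(u in w) [set y | dotv y u <= - h u].

End Defs.

(* Standard Gaussian measure gamma^n, written out as iterated one-dimensional
   Lebesgue integrals of the standard normal density (Fubini/Tonelli form). *)
Fixpoint gaussn (R : realType) (n : nat) : set 'rV[R]_n -> \bar R :=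
  match n return set 'rV[R]_n -> \bar R with
  | 0 => fun A => (\1_A (0 : 'rV[R]_0))%:E
  | m.+1 => fun A =>
      (\int[@lebesgue_measure R]_t
         (((Num.sqrt (pi *+ 2))^-1 * expR (- t ^+ 2 / 2))%:E *
          @gaussn R m [set v : 'rV[R]_m | A (row_mx (\row_(j < 1) t) v)]))%E
  end.

(* I_{mu_i}(f) = gamma^n([f]) * \int_{omega_i} f d mu_i ,
   where mu_i = mu restricted to omega_i, so \int_{omega_i} f dmu_i = \int_{omega_i} f dmu *)
Definition Imu (R : realType) (n : nat) (C : set 'rV[R]_n)
  (mu : {measure set (BorelRn R n) -> \bar R}) (w : set 'rV[R]_n) (f : 'rV[R]_n -> R)
  : \bar R :=
  (gaussn (wulff C w f) * \int[mu]_(x in (w : set (BorelRn R n))) (f x)%:E)%E.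

(* Main.v *)
Require Import Defs.
Set Warnings "-all".
From HB Require Import structures.
From mathcomp Require Import all_boot all_order all_algebra.
From mathcomp Require Import all_classical all_reals all_analysis.
From mathcomp Require Import ring lra.
Import Order.TTheory GRing.Theory Num.Theory.
Import numFieldNormedType.Exports.
Local Open Scope classical_set_scope.
Local Open Scope ring_scope.

Lemma int_mono d (T : measurableType d) (R : realType) (mu : {measure set T -> \bar R})
  (f g : T -> \bar R) :
  (forall x, (0 <= f x)%E) -> (forall x, (f x <= g x)%E) ->
  (\int[mu]_x f x <= \int[mu]_x g x)%E.
Proof.
move=> f0 fg.
have g0 : forall x, (0 <= g x)%E by move=> x; exact: le_trans (f0 x) (fg x).
rewrite !ge0_integralTE//; apply: le_ereal_sup => _ [h hf <-]; exists h => //.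
by move=> x; exact: le_trans (hf x) (fg x).
Qed.

Definition dens {R : realType} (t : R) : R := (Num.sqrt (pi *+ 2))^-1 * expR (- t ^+ 2 / 2).

Lemma dens_ge0 (R : realType) (t : R) : 0 <= dens t.
Proof. by rewrite /dens mulr_ge0// ?invr_ge0 ?sqrtr_ge0// expR_ge0. Qed.

Lemma gaussnS (R : realType) m (A : set 'rV[R]_m.+1) :
  gaussn A = (\int[@lebesgue_measure R]_t
         ((dens t)%:E * @gaussn R m [set v : 'rV[R]_m | A (row_mx (\row_(j < 1) t) v)]))%E.
Proof. by []. Qed.

Lemma gaussn_ge0 (R : realType) m (A : set 'rV[R]_m) : (0 <= gaussn A)%E.
Proof.
elim: m A => [|m IH] A; first by rewrite /= lee_fin /indic; case: (_ \in _).
rewrite gaussnS; apply: integral_ge0 => t _; apply: mule_ge0 => //.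
by rewrite lee_fin dens_ge0.
Qed.

Lemma gaussn_mono (R : realType) m (A B : set 'rV[R]_m) : A `<=` B -> (gaussn A <= gaussn B)%E.
Proof.
elim: m A B => [|m IH] A B AB.
  rewrite /= lee_fin /indic; case: (boolP (0 \in A)) => [/set_mem/AB H|_].
    by rewrite mem_set.
  by case: (_ \in _).
rewrite !gaussnS; apply: int_mono => t.
  by apply: mule_ge0 => //; rewrite ?lee_fin ?dens_ge0 ?gaussn_ge0.
apply: lee_wpmul2l; first by rewrite lee_fin dens_ge0.
by apply: IH => v /= /AB.
Qed.

Lemma ind1 (R : realType) (T : Type) (A : set T) (x : T) : A x -> \1_A x = 1 :> R.
Proof. by move=> Ax; rewrite /indic mem_set. Qed.
Lemma ind0 (R : realType) (T : Type) (A : set T) (x : T) : ~ A x -> \1_A x = 0 :> R.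
Proof. by move=> Ax; rewrite /indic memNset. Qed.

Lemma fin_ge0 (R : realType) (x : R) : 0 <= x -> (0 <= x%:E)%E.
Proof. by rewrite lee_fin. Qed.

Lemma ind_ge0 (R : realType) (T : Type) (A : set T) (x : T) : (0 : R) <= \1_A x.
Proof. by rewrite /indic; case: (x \in A). Qed.



Lemma gaussn_ball (R : realType) m (x : 'rV[R]_m) (r : R) : 0 < r ->
  exists g : R, 0 < g /\ (g%:E <= gaussn (ball x r))%E.
Proof.
elim: m x => [|m IH] x r0.
  exists 1; split => //=; rewrite lee_fin /indic mem_set//.
  by split=> // i [].
have [g' [g'0 hg']] := IH (rsubmx (x : 'M[R]_(1, 1 + m))) r0.
pose x0 : R := (lsubmx (x : 'M[R]_(1, 1 + m))) 0 0.
pose M := `|x0| + r.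
pose de := (Num.sqrt (pi *+ 2))^-1 * expR (- M ^+ 2 / 2).
have de0 : 0 < de.
  apply: mulr_gt0; last exact: expR_gt0.
  by rewrite invr_gt0 sqrtr_gt0 pmulrn_rgt0// pi_gt0.
exists (de * g' * (r *+ 2)); split.
  by apply: mulr_gt0; [apply: mulr_gt0|rewrite pmulrn_lgt0].
rewrite gaussnS.
apply: (le_trans _ (@int_mono _ _ R (@lebesgue_measure R) (fun t => ((de * g') * \1_(ball x0 r) t)%:E) _ _ _)).
- under eq_integral => t _ do rewrite EFinM.
  rewrite ge0_integralZl_EFin //; first last.
  + by rewrite mulr_ge0 ?(ltW de0) ?(ltW g'0).
  + by apply/measurable_realfun.measurable_EFinP; apply: measurable_realfun.measurable_indic; exact: measurable_realfun.measurable_ball.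
  rewrite integral_indic ?setIT; last exact: (measurable_realfun.measurable_ball x0 r).
  rewrite EFinM; apply: lee_wpmul2l; first by rewrite lee_fin mulr_ge0 ?(ltW de0) ?(ltW g'0).
  by rewrite le_eqVlt; apply/orP; left; apply/eqP; symmetry; exact: (@lebesgue_measure_ball R x0 r (ltW r0)).
- exact: measurableT.
- by move=> t; apply: fin_ge0; rewrite mulr_ge0 ?mulr_ge0 ?(ltW de0) ?(ltW g'0) ?ind_ge0.
- move=> t; case: (pselect (ball x0 r t)) => tb; last first.
    by rewrite ind0 // mulr0 mule_ge0// ?lee_fin ?dens_ge0 ?gaussn_ge0.
  rewrite ind1 // mulr1 EFinM; apply: lee_pmul.
  + by rewrite lee_fin ltW.
  + by rewrite lee_fin ltW.
  + rewrite lee_fin /dens /de; apply: ler_wpM2l.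
      by rewrite invr_ge0 sqrtr_ge0.
    rewrite ler_expR ler_pdivrMr // divfK // lerN2.
    move: tb; rewrite /ball /= => /ltr_normlP [h1 h2].
    have h3 : - `|x0| <= x0 by rewrite lerNl -[`|x0|]normrN; exact: ler_norm.
    have h4 : x0 <= `|x0| by exact: ler_norm.
    rewrite /M; nra.
  + apply: (le_trans hg'); apply: gaussn_mono => v vb /=.
    split => // i j; rewrite (ord1 i) -(@splitK 1 m j).
    case: (@fintype.split 1 m j) => k /=.
    * rewrite (@row_mxEl R 1 1 m) mxE (ord1 k).
      by move: tb; rewrite /x0 mxE.
    * rewrite (@row_mxEr R 1 1 m).
      move: vb => [_ /(_ 0 k)]; rewrite mxE. by [].
Qed.

Lemma dotvC (R : realType) n (u v : 'rV[R]_n) : dotv u v = dotv v u.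
Proof. by rewrite /dotv; apply: eq_bigr => i _; rewrite mulrC. Qed.

Lemma dotvDZ (R : realType) n (u y : 'rV[R]_n) (c : R) :
  dotv u (y + c *: u) = dotv u y + c * dotv u u.
Proof.
rewrite /dotv mulr_sumr -big_split; apply: eq_bigr => i _; rewrite !mxE /=; ring.
Qed.

Lemma coord_le1 (R : realType) n (u : 'rV[R]_n) j : dotv u u = 1 -> -1 <= u 0 j <= 1.
Proof.
move=> h; have h2 : u 0 j * u 0 j <= 1.
  rewrite -h /dotv (bigD1 j) //= lerDl; apply: sumr_ge0 => i _.
  by rewrite -expr2 sqr_ge0.
by apply/andP; split; nra.
Qed.

Lemma ball_wulff (R : realType) n (C : set 'rV[R]_n) x (r : R) (w : set 'rV[R]_n) :
  0 < r -> ball x r `<=` C -> w `<=` Omega C ->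
  ball x (r / 2) `<=` wulff C w (fun _ => r / 2).
Proof.
move=> r0 hr hw y yb; split.
  by apply: hr; apply: (le_ball _ yb); rewrite ler_pdivrMr //; lra.
move=> u /hw [uu /interior_subset pu] /=.
have hyu : C (y + (r / 2) *: u).
  apply: hr; split => // i j; rewrite (ord1 i) !mxE.
  move: yb => [_ /(_ 0 j)]; rewrite /ball /= => /ltr_normlP [h1 h2].
  have /andP[h3 h4] := @coord_le1 _ _ u j uu.
  apply/ltr_normlP; split; nra.
have := pu _ hyu; rewrite dotvDZ uu dotvC mulr1; lra.
Qed.

Theorem lemma4p3 (R : realType) (n : nat) (C : set 'rV[R]_n)
  (hC : closed_convex_cone C) (hCp : pointed C) (hCn : (C°) !=set0)
  (mu : {finite_measure set (BorelRn R n) -> \bar R})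
  (hmuO : mu (~` (Omega C : set (BorelRn R n))) = 0%E)
  (hmu0 : mu setT != 0%E)
  (w : nat -> set 'rV[R]_n)
  (hwc : forall i, compact (w i))
  (hwO : forall i, w i `<=` Omega C)
  (hwi : forall i, w i `<=` rel_interior (Omega C) (w i.+1))
  (hwU : \bigcup_i w i = Omega C)
  (i0 : nat) (hi0 : mu (w i0 : set (BorelRn R n)) != 0%E)
  (K : nat -> set 'rV[R]_n)
  (hK : forall i, (i0 <= i)%N ->
     KCw C (w i) (K i) /\
     Imu C mu (w i) (hbar (K i)) =
       ereal_sup [set Imu C mu (w i) f | f in Cplus (w i)]) :
  exists a : R, 0 < a /\
    forall i, (i0 <= i)%N -> (a%:E < Imu C mu (w i) (hbar (K i)))%E.
Proof.
have [x Cx] := hCn.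
move: Cx; rewrite /interior => /nbhs_ballP [r r0 hr].
pose c := r / 2.
have c0 : 0 < c by rewrite /c divr_gt0.
have [g [g0 hg]] := @gaussn_ball R n x c c0.
have mw : forall i, measurable (w i : set (BorelRn R n)).
  move=> i; have cl : closed (w i) := compact_closed (@norm_hausdorff _ _) (hwc i).
  rewrite -[w i]setCK; apply: measurableC; apply: sub_sigma_algebra.
  by rewrite /= openC.
have wmono : forall i k, w i `<=` w (i + k)%N.
  move=> i; elim=> [|k IH]; first by rewrite addn0.
  move=> y /IH yw; rewrite addnS.
  have [U [oU Uy UO]] := hwi _ _ yw.
  by apply: UO; split => //; exact: hwO yw.
have fin0 : mu (w i0 : set (BorelRn R n)) \is a fin_num by exact: fin_num_measure.
have m00 : 0 < fine (mu (w i0 : set (BorelRn R n))).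
  apply: fine_gt0; apply/andP; split.
    by rewrite lt_neqAle eq_sym hi0 measure_ge0.
  by rewrite ltey_eq fin0.
pose m0 := fine (mu (w i0 : set (BorelRn R n))).
exists (g * c * m0 / 2); split.
  by rewrite divr_gt0 // !mulr_gt0.
move=> i hi.
have [_ ->] := hK i hi.
have Cf : Cplus (w i) (fun _ => c).
  split; last by [].
  by apply: continuous_subspaceT => ?; exact: cst_continuous.
apply: (@lt_le_trans _ _ (Imu C mu (w i) (fun _ => c))); last first.
  by apply: ereal_sup_ubound; exists (fun _ => c).
rewrite /Imu.
rewrite (integral_cst mu (mw i) c%:E).
apply: (@lt_le_trans _ _ (g * c * m0)%:E).
  rewrite lte_fin.
  have : 0 < g * c * m0 by rewrite !mulr_gt0.
  lra.
rewrite -mulrA EFinM EFinM; apply: lee_pmul.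
- by rewrite lee_fin ltW.
- by rewrite -EFinM lee_fin mulr_ge0 // ltW.
- apply: (le_trans hg); apply: gaussn_mono.
  exact: (@ball_wulff R n C x r (w i) r0 hr (hwO i)).
- apply: lee_wpmul2l; first by rewrite lee_fin ltW.
  rewrite /m0 fineK //.
  apply: le_measure; rewrite ?inE; [exact: mw|exact: mw|].
  by rewrite -(subnKC hi); exact: wmono.
Qed.
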